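(* Let $\tau=k^{-7}$ and $t=\frac{1}{\tau^2}\big(3\ln(1/\tau)+\ln R\big)+\lceil 4k^2\ln k\rceil\cdot\big\lceil\frac4{\tau^2}\ln(1/\tau)\big\rceil$. Let $h(\vec y)=\mathrm{sgn}(\sum_{i\in[k]}\langle\vec w_i,\vec y_i\rangle-\theta)$ be a halfspace on $\{0,1\}^{kR}$ and let $r\in[k]$ be such that $|C_\tau(\vec w_r)|>t$. Define $\tilde h(\vec y)=\mathrm{sgn}(\sum_{i\in[k]}\langle\tilde{\vec w}_i,\vec y_i\rangle-\theta)$ where $\tilde{\vec w}_r=\mathrm{truncate}(\vec w_r,B_t(\vec w_r))$ and $\tilde{\vec w}_i=\vec w_i$ for $i\neq r$. Then for each $b\in\{0,1\}$, $$\Big|\mathbb E_{\tilde{\mathcal D}_b^R}[\tilde h(\vec y)]-\mathbb E_{\tilde{\mathcal D}_b^R}[h(\vec y)]\Big|\le\frac1{k^2}.$$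
   Context: $\mathrm{sgn}(t)=1$ if $t\ge0$, else $0$. Fix integers $k\ge2$, $R\ge1$ and any distributions $\mathcal D_0,\mathcal D_1$ on $\{0,1\}^k$. Points $\vec y\in\{0,1\}^{kR}$ are $k\times R$ matrices with rows $\vec y_i\in\{0,1\}^R$. $\tilde{\mathcal D}_b^R$: draw the $R$ columns of $\vec x$ independently from $\mathcal D_b$, then independently for each entry set $y_i^{(j)}=x_i^{(j)}$ w.p. $1-1/k^2$ and a fresh uniform bit w.p. $1/k^2$. For $\vec u\in\mathbb R^n$ order indices $i_1,\dots,i_n$ by decreasing $|u^{(i)}|$ (ties by increasing index); $B_t(\vec u)=\{i_1,\dots,i_{\min(t,n)}\}$; $\sigma_m^2=\sum_{j\ge m}|u^{(i_j)}|^2$; the $\tau$-critical index $c_\tau(\vec u)$ is the smallest $m$ with $|u^{(i_m)}|\le\tau\sigma_m$ ($+\infty$ if none); $C_\tau(\vec u)=\{i_1,\dots,i_{c_\tau(\vec u)-1}\}$ if $c_\tau<\infty$, and $[n]$ otherwise. $\mathrm{truncate}(\vec u,S)$ is the vector agreeing with $\vec u$ on coordinates in $S$ and equal to $0$ elsewhere. *)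

(* Defs.v *)
From Stdlib Require Import Reals.
From mathcomp Require Import all_boot.

Set Implicit Arguments.
Unset Strict Implicit.
Unset Printing Implicit Defensive.

Local Open Scope R_scope.

Definition sgn (x : R) : R := if Rle_dec 0 x then 1 else 0.

Definition Rfloor (x : R) : Z := Int_part x.
Definition Rceil (x : R) : Z := (- Int_part (- x))%Z.

Definition b2R (b : bool) : R := if b then 1 else 0.

Definition ord_before (n : nat) (u : 'I_n -> R) (i j : 'I_n) : bool :=
  if Rlt_dec (Rabs (u j)) (Rabs (u i)) then true
  else if Req_EM_T (Rabs (u i)) (Rabs (u j)) then (i <= j)%N else false.

Definition sorted_idx (n : nat) (u : 'I_n -> R) : seq 'I_n :=
  sort (@ord_before n u) (enum 'I_n).

Definition B_set (n : nat) (t : nat) (u : 'I_n -> R) : seq 'I_n :=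
  take t (sorted_idx u).

(* sigma_m^2 with m given 0-based as p (i.e. m = p+1):
   sum of |u_{i_j}|^2 over positions j >= p (0-based) *)
Definition sigma2 (n : nat) (u : 'I_n -> R) (p : nat) : R :=
  \big[Rplus/0]_(i <- drop p (sorted_idx u)) (Rabs (u i))^2.

Definition crit_cond (n : nat) (tau : R) (u : 'I_n -> R) (p : nat) : bool :=
  match drop p (sorted_idx u) with
  | i :: _ => if Rle_dec (Rabs (u i)) (tau * sqrt (sigma2 u p))
              then true else false
  | [::] => false
  end.

(* 0-based position of the tau-critical index, i.e. c_tau(u) - 1;
   equals n when c_tau(u) = +infinity *)
Definition crit_pos (n : nat) (tau : R) (u : 'I_n -> R) : nat :=
  find (crit_cond tau u) (iota 0 n).

Definition C_set (n : nat) (tau : R) (u : 'I_n -> R) : seq 'I_n :=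
  take (crit_pos tau u) (sorted_idx u).

Definition truncate (n : nat) (u : 'I_n -> R) (S : seq 'I_n) : 'I_n -> R :=
  fun i => if i \in S then u i else 0.

(* halfspace on {0,1}^{kR}: y is a k x R bit matrix, y (i, j) = y_i^{(j)} *)
Definition halfspace (k m : nat) (w : 'I_k -> 'I_m -> R) (theta : R)
  (y : {ffun 'I_k * 'I_m -> bool}) : R :=
  sgn (\big[Rplus/0]_(i < k) \big[Rplus/0]_(j < m) (w i j * b2R (y (i, j)))
       - theta).

(* probability that the noisy bit equals c given the original bit a:
   keep a w.p. 1 - 1/k^2, else a fresh uniform bit *)
Definition noise (k : nat) (a c : bool) : R :=
  (1 - / (INR k)^2) * (if a == c then 1 else 0) + / (INR k)^2 * / 2.

(* E_{tilde D^R}[f]: columns of x i.i.d. from D, then entrywise noise *)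
Definition Enoisy (k m : nat) (D : {ffun 'I_k -> bool} -> R)
  (f : {ffun 'I_k * 'I_m -> bool} -> R) : R :=
  \big[Rplus/0]_(x : {ffun 'I_k * 'I_m -> bool})
   \big[Rplus/0]_(y : {ffun 'I_k * 'I_m -> bool})
     ((\big[Rmult/1]_(j < m) D [ffun i => x (i, j)])
      * (\big[Rmult/1]_(p : 'I_k * 'I_m) noise k (x p) (y p))
      * f y).

Definition tau_of (k : nat) : R := / (INR k)^7.

Definition t_of (k m : nat) : R :=
  let tau := tau_of k in
  / tau^2 * (3 * ln (/ tau) + ln (INR m))
  + IZR (Rceil (4 * (INR k)^2 * ln (INR k)))
    * IZR (Rceil (4 / tau^2 * ln (/ tau))).

Definition w_tilde (k m : nat) (w : 'I_k -> 'I_m -> R) (r : 'I_k) (t : nat)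
  : 'I_k -> 'I_m -> R :=
  fun i => if i == r then truncate (w r) (B_set t (w r)) else w i.

(* Main.v *)
From HB Require Import structures.
Require Import Defs.
From Stdlib Require Import Reals Lra Lia Classical ZArith.
From mathcomp Require Import all_boot.
Set Implicit Arguments.
Unset Strict Implicit.
Local Open Scope R_scope.
Lemma RplusA : associative Rplus. Proof. move=> *; ring. Qed.
Lemma RmultA : associative Rmult. Proof. move=> *; ring. Qed.
HB.instance Definition _ := Monoid.isComLaw.Build R R0 Rplus RplusA Rplus_comm Rplus_0_l.
HB.instance Definition _ := Monoid.isComLaw.Build R R1 Rmult RmultA Rmult_comm Rmult_1_l.
HB.instance Definition _ := Monoid.isMulLaw.Build R R0 Rmult Rmult_0_l Rmult_0_r.
HB.instance Definition _ := Monoid.isAddLaw.Build R Rmult Rplus Rmult_plus_distr_r Rmult_plus_distr_l.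

Section Sums.
Variable (I : Type).
Implicit Types (r : seq I) (P : pred I) (F G : I -> R).

Lemma sumR_le r P F G : (forall i, P i -> F i <= G i) ->
  \big[Rplus/0]_(i <- r | P i) F i <= \big[Rplus/0]_(i <- r | P i) G i.
Proof.
move=> H; elim: r => [|x r IH]; first by rewrite !big_nil; lra.
rewrite !big_cons; case: ifP => Px //; have := H x Px; lra.
Qed.

Lemma sumR_ge0 r P F : (forall i, P i -> 0 <= F i) ->
  0 <= \big[Rplus/0]_(i <- r | P i) F i.
Proof.
move=> H; elim: r => [|x r IH]; first by rewrite !big_nil; lra.
rewrite !big_cons; case: ifP => Px //; have := H x Px; lra.
Qed.

Lemma sumR_abs r P F :
  Rabs (\big[Rplus/0]_(i <- r | P i) F i) <= \big[Rplus/0]_(i <- r | P i) Rabs (F i).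
Proof.
elim: r => [|x r IH]; first by rewrite !big_nil Rabs_R0; lra.
rewrite !big_cons; case: ifP => Px //.
have := Rabs_triang (F x) (\big[Rplus/0]_(j <- r | P j) F j); lra.
Qed.

Lemma sumR_sub r P F G :
  \big[Rplus/0]_(i <- r | P i) (F i - G i) =
  \big[Rplus/0]_(i <- r | P i) F i - \big[Rplus/0]_(i <- r | P i) G i.
Proof.
elim: r => [|x r IH]; first by rewrite !big_nil; lra.
rewrite !big_cons; case: ifP => Px //; rewrite IH; lra.
Qed.

Lemma sumR_mull r P F c :
  \big[Rplus/0]_(i <- r | P i) (c * F i) = c * \big[Rplus/0]_(i <- r | P i) F i.
Proof.
elim: r => [|x r IH]; first by rewrite !big_nil; lra.
rewrite !big_cons; case: ifP => Px //; rewrite IH; lra.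
Qed.

Lemma sumR_const_le r F c : (forall i, F i <= c) ->
  \big[Rplus/0]_(i <- r) F i <= INR (size r) * c.
Proof.
move=> H; elim: r => [|x r IH]; first by rewrite !big_nil /=; lra.
rewrite big_cons; change (size (x :: r)) with (S (size r)); rewrite S_INR; have := H x; lra.
Qed.

Lemma sumR_amgm r F lam : 0 < lam -> (forall i, 0 <= F i) ->
  \big[Rplus/0]_(i <- r) F i <=
  \big[Rplus/0]_(i <- r) (F i)^2 / (2 * lam) + INR (size r) * lam / 2.
Proof.
move=> Hl H; elim: r => [|x r IH]; first by rewrite !big_nil /=; lra.
rewrite !big_cons; change (size (x :: r)) with (S (size r)); rewrite S_INR.
have : F x <= (F x)^2 / (2 * lam) + lam / 2.
  have h : 0 <= (F x - lam)^2 / (2 * lam).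
    apply: Rle_mult_inv_pos; [apply: pow2_ge_0 | lra].
  have e : (F x - lam)^2 / (2 * lam) = (F x)^2 / (2 * lam) + lam / 2 - F x.
    field; lra.
  lra.
lra.
Qed.
End Sums.

Section Measure.
Variable (I : finType) (q : I -> bool -> R) (alpha : R).
Hypothesis hq0 : forall p c, 0 <= q p c.
Hypothesis hq1 : forall p, q p true + q p false = 1.
Hypothesis hqa : forall p c, q p c <= alpha.

Definition mu (y : {ffun I -> bool}) : R := \big[Rmult/1]_(p : I) q p (y p).

Definition flip (a : I) (y : {ffun I -> bool}) : {ffun I -> bool} :=
  [ffun p => if p == a then ~~ y p else y p].

Lemma flipK a : involutive (flip a).
Proof. move=> y; apply/ffunP => p; rewrite !ffunE; case: eqP => //= _; exact: negbK. Qed.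

Definition rho (a : I) (y : {ffun I -> bool}) : R :=
  \big[Rmult/1]_(p | p != a) q p (y p).

Lemma mu_split a y : mu y = q a (y a) * rho a y.
Proof. by rewrite /mu (bigD1 a) //. Qed.

Lemma rho_flip a y : rho a (flip a y) = rho a y.
Proof. apply: eq_bigr => p /negbTE pa; by rewrite ffunE pa. Qed.

Lemma prodR_ge0 (J : Type) (r : seq J) (P : pred J) (F : J -> R) :
  (forall i, P i -> 0 <= F i) -> 0 <= \big[Rmult/1]_(i <- r | P i) F i.
Proof.
move=> H; elim: r => [|x r IH]; first by rewrite big_nil; lra.
rewrite big_cons; case: ifP => Px //; apply: Rmult_le_pos => //; exact: H.
Qed.

Lemma mu_ge0 y : 0 <= mu y.
Proof. apply: prodR_ge0 => *; exact: hq0. Qed.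
Lemma rho_ge0 a y : 0 <= rho a y.
Proof. apply: prodR_ge0 => *; exact: hq0. Qed.

Lemma mu_sum1 : \big[Rplus/0]_(y : {ffun I -> bool}) mu y = 1.
Proof.
rewrite /mu -(bigA_distr_bigA (fun p c => q p c)).
rewrite big1 // => p _; rewrite big_bool; exact: hq1.
Qed.

Definition ind (b : bool) : R := if b then 1 else 0.

Lemma measure_bound (A : seq I) : uniq A ->
  forall F : pred {ffun I -> bool},
  (forall y y', F y -> F y' -> (forall p, p \notin A -> y p = y' p) -> y = y') ->
  \big[Rplus/0]_(y : {ffun I -> bool}) (mu y * ind (F y)) <= alpha ^ (size A).
Proof.
elim: A => [|a A IH] /=.
  move=> _ F _; rewrite -mu_sum1; apply: sumR_le => y _.
  have := mu_ge0 y; rewrite /ind; case: (F y); lra.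
move=> /andP [aA uA] F HF.
pose G := fun y => F y || F (flip a y).
have HG : forall y y', G y -> G y' -> (forall p, p \notin A -> y p = y' p) -> y = y'.
  move=> y y' Gy Gy' Hyy.
  have ya : y a = y' a by apply: Hyy.
  have Hfl : forall z z' : {ffun I -> bool}, (forall p, p \notin A -> z p = z' p) ->
      forall p, p \notin a :: A -> flip a z p = flip a z' p.
    move=> z z' Hz p; rewrite inE negb_or => /andP [pa pA].
    by rewrite !ffunE (negbTE pa) Hz.
  have Hnofl : forall z z' : {ffun I -> bool}, (forall p, p \notin A -> z p = z' p) ->
      forall p, p \notin a :: A -> z p = z' p.
    move=> z z' Hz p; rewrite inE negb_or => /andP [pa pA]; exact: Hz.
  have Hmix : forall z z' : {ffun I -> bool}, (forall p, p \notin A -> z p = z' p) ->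
      forall p, p \notin a :: A -> z p = flip a z' p.
    move=> z z' Hz p; rewrite inE negb_or => /andP [pa pA].
    by rewrite !ffunE (negbTE pa) Hz.
  case/orP: Gy => Fy; case/orP: Gy' => Fy'.
  - exact: HF (Hnofl _ _ Hyy).
  - have e := HF _ _ Fy Fy' (Hmix _ _ Hyy).
    by move: ya; rewrite e ffunE eqxx; case: (y' a).
  - have e := HF _ _ Fy' Fy (Hmix _ _ (fun p h => esym (Hyy p h))).
    by move: ya; rewrite e ffunE eqxx; case: (y a).
  - have e := HF _ _ Fy Fy' (Hfl _ _ Hyy).
    by rewrite -(flipK a y) e flipK.
have Hnot : forall y, F y -> F (flip a y) -> False.
  move=> y Fy Ffy.
  have e : y = flip a y.
    apply: HF => // p pA; rewrite ffunE; case: eqP => // pa.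
    by move: pA; rewrite pa inE eqxx.
  have ea : y a = flip a y a by rewrite -e.
  by move: ea; rewrite ffunE eqxx; case: (y a).
have step1 : \big[Rplus/0]_(y : {ffun I -> bool}) (mu y * ind (F y))
   <= alpha * \big[Rplus/0]_(y : {ffun I -> bool}) (rho a y * ind (F y)).
  rewrite -sumR_mull; apply: sumR_le => y _; rewrite (mu_split a).
  have := rho_ge0 a y; have := hqa a (y a); have := hq0 a (y a).
  rewrite /ind; case: (F y) => ???; [|lra].
  rewrite !Rmult_1_r; apply: Rmult_le_compat_r => //.
have step2 : \big[Rplus/0]_(y : {ffun I -> bool}) (mu y * ind (G y))
   = \big[Rplus/0]_(y : {ffun I -> bool}) (rho a y * ind (F y)).
  have e1 : \big[Rplus/0]_(y : {ffun I -> bool}) (mu y * ind (G y)) =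
      \big[Rplus/0]_(y : {ffun I -> bool}) (mu y * ind (F y)) +
      \big[Rplus/0]_(y : {ffun I -> bool}) (mu y * ind (F (flip a y))).
    rewrite -big_split; apply: eq_bigr => y _ /=; rewrite /G /ind.
    case Fy: (F y); case Ffy: (F (flip a y)) => //=; try lra.
    by case: (Hnot y).
  rewrite e1 [X in _ + X](reindex_inj (can_inj (flipK a))) /= -big_split.
  apply: eq_bigr => y _ /=; rewrite ?flipK !(mu_split a) ?rho_flip ?ffunE ?eqxx.
  have := hq1 a; case: (y a) => /= h; rewrite /ind; case: (F y); rewrite -?Rmult_plus_distr_r -?Rmult_plus_distr_l; try rewrite h; try rewrite (Rplus_comm (q a false)) h; ring.
have hal : 0 <= alpha by have := hqa a true; have := hq0 a true; lra.
apply: (Rle_trans _ _ _ step1); rewrite -step2.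
apply: Rmult_le_compat_l => //; exact: IH.
Qed.
End Measure.

Lemma Dsum1 (k m : nat) (D : {ffun 'I_k -> bool} -> R)
  (hD1 : \big[Rplus/R0]_(x : {ffun 'I_k -> bool}) D x = R1) :
  \big[Rplus/0]_(x : {ffun 'I_k * 'I_m -> bool})
     \big[Rmult/1]_(j < m) D [ffun i => x (i, j)] = 1.
Proof.
pose h := fun X : {ffun 'I_m -> {ffun 'I_k -> bool}} =>
  [ffun p : 'I_k * 'I_m => X p.2 p.1].
pose g := fun x : {ffun 'I_k * 'I_m -> bool} =>
  [ffun j : 'I_m => [ffun i : 'I_k => x (i, j)]].
have hb : bijective h.
  exists g.
  - move=> X; apply/ffunP => j; rewrite ffunE; apply/ffunP => i; by rewrite !ffunE.
  - move=> x; apply/ffunP => [[i j]]; by rewrite !ffunE.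
rewrite (reindex h) /=; last exact: onW_bij.
transitivity (\big[Rplus/0]_(X : {ffun 'I_m -> {ffun 'I_k -> bool}})
                \big[Rmult/1]_(j < m) D (X j)).
  apply: eq_bigr => X _; apply: eq_bigr => j _; congr D.
  by apply/ffunP => i; rewrite !ffunE.
rewrite -(bigA_distr_bigA (fun (j : 'I_m) (c : {ffun 'I_k -> bool}) => D c)).
by rewrite big1.
Qed.

Lemma sumR_const_le_in (J : eqType) (r : seq J) (F : J -> R) c :
  (forall i, i \in r -> F i <= c) ->
  \big[Rplus/0]_(i <- r) F i <= INR (size r) * c.
Proof.
elim: r => [|x r IH] H; first by rewrite !big_nil /=; lra.
rewrite big_cons; change (size (x :: r)) with (S (size r)); rewrite S_INR.
have h1 := H x (mem_head x r).
have h2 : \big[Rplus/0]_(i <- r) F i <= INR (size r) * c.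
  apply: IH => i ir; apply: H; by rewrite inE ir orbT.
lra.
Qed.

Lemma seq_sep (c d : nat -> R) (beta gamma e : R) (n a : nat) :
  0 <= beta -> (forall s, d s = 0 \/ Rabs (d s) = 1) ->
  (forall s u, (a <= s)%N -> (s < u)%N -> (u < a + n)%N -> Rabs (c u) <= beta * Rabs (c s)) ->
  (forall s, (a <= s)%N -> (s < a + n)%N -> e <= gamma * Rabs (c s)) ->
  INR n * beta + gamma <= 1 ->
  (exists s, [/\ (a <= s)%N, (s < a + n)%N & d s <> 0]) ->
  e <= Rabs (\big[Rplus/0]_(u <- iota a n) (c u * d u)).
Proof.
move=> hb hd; elim: n a => [|n IH] a Hc He Hn [s [h1 h2 h3]].
  by move: h1 h2; rewrite addn0 => h1 h2; have := leq_trans h2 h1; rewrite ltnn.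
rewrite /= big_cons.
have Hrest : Rabs (\big[Rplus/0]_(u <- iota a.+1 n) (c u * d u)) <= INR n * (beta * Rabs (c a)).
  apply: (Rle_trans _ _ _ (sumR_abs _ _ _)).
  rewrite -{2}(size_iota a.+1 n); apply: sumR_const_le_in => u; rewrite mem_iota => /andP [u1 u2].
  have u2' : (u < a + n.+1)%N by rewrite addnS.
  rewrite Rabs_mult; have hc := Hc a u (leqnn a) u1 u2'.
  have hdu : Rabs (d u) <= 1 by case: (hd u) => ->; rewrite ?Rabs_R0; lra.
  have := Rabs_pos (c u); nra.
have [da0 | dan0] := hd a.
- have [sa | sna] := eqVneq s a; first by rewrite sa in h3.
  rewrite da0 Rmult_0_r Rplus_0_l; apply: IH.
  + move=> s' u s1 su u1; apply: Hc => //; [exact: ltnW | by rewrite addSnnS in u1].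
  + move=> s' s1 s2; apply: He; [exact: ltnW | by rewrite addSnnS in s2].
  + rewrite S_INR in Hn; lra.
  + exists s; split; [by rewrite ltn_neqAle eq_sym sna h1 | by rewrite addSnnS | exact: h3].
- have ha : (a < a + n.+1)%N by rewrite addnS ltnS leq_addr.
  have he := He a (leqnn a) ha.
  have hca := Rabs_pos (c a).
  rewrite S_INR in Hn.
  have key : gamma * Rabs (c a) <= Rabs (c a) - INR n * (beta * Rabs (c a)) by nra.
  set S := \big[Rplus/0]_(u <- iota a.+1 n) (c u * d u) in Hrest *.
  have tri := Rabs_triang (c a * d a + S) (- S).
  have e2 : c a * d a + S + - S = c a * d a by ring.
  rewrite e2 Rabs_mult dan0 Rmult_1_r Rabs_Ropp in tri.
  lra.
Qed.

Lemma exp_le_mono x y : x <= y -> exp x <= exp y.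
Proof. case/Rle_lt_or_eq_dec => h; [apply: Rlt_le; exact: exp_increasing | rewrite h; lra]. Qed.

Lemma ln_le_mono x y : 0 < x -> x <= y -> ln x <= ln y.
Proof. move=> hx; case/Rle_lt_or_eq_dec => h; [apply: Rlt_le; exact: ln_increasing | rewrite h; lra]. Qed.

Lemma pow_exp_bound x j : 0 <= x <= 1 -> (1 - x) ^ j <= exp (- (x * INR j)).
Proof.
move=> hx; elim: j => [|j IH]; first by rewrite /= Rmult_0_r Ropp_0 exp_0; lra.
rewrite S_INR; change ((1 - x) ^ (S j)) with ((1 - x) * (1 - x) ^ j).
have e : - (x * (INR j + 1)) = - x + - (x * INR j) by ring.
rewrite e exp_plus.
have h1 : 1 - x <= exp (- x) by have := exp_ineq1_le (- x); lra.
apply: Rmult_le_compat => //; [lra | apply: pow_le; lra].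
Qed.

Lemma exp_neg_ln y : 0 < y -> exp (- ln y) = / y.
Proof. move=> hy; by rewrite exp_Ropp exp_ln. Qed.

Lemma Rceil_ge x : x <= IZR (Rceil x).
Proof. rewrite /Rceil opp_IZR; have [h1 h2] := base_Int_part (- x); lra. Qed.
Lemma Rceil_lt x : IZR (Rceil x) < x + 1.
Proof. rewrite /Rceil opp_IZR; have [h1 h2] := base_Int_part (- x); lra. Qed.

Lemma IZR_to_nat z : (0 <= IZR z) -> INR (Z.to_nat z) = IZR z.
Proof.
move=> h; rewrite INR_IZR_INZ Z2Nat.id //; apply: le_IZR; exact: h.
Qed.

Lemma ln_le_sub1 x : 0 < x -> ln x <= x - 1.
Proof.
move=> hx; have h := exp_ineq1_le (x - 1).
rewrite -(ln_exp (x - 1)); apply: ln_le_mono => //; lra.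
Qed.

Section SortedSeq.
Variables (J : eqType) (sl : seq J) (f : J -> R) (d0 : J).

Definition Qs p := \big[Rplus/0]_(i <- drop p sl) (Rabs (f i))^2.
Definition av p := Rabs (f (nth d0 sl p)).

Lemma Qs_ge0 p : 0 <= Qs p.
Proof. apply: sumR_ge0 => i _; apply: pow2_ge_0. Qed.

Lemma Qs_step p : (p < size sl)%N -> Qs p = av p ^ 2 + Qs p.+1.
Proof. move=> hp; by rewrite /Qs (drop_nth d0 hp) big_cons. Qed.

Lemma Qs_mono p : Qs p.+1 <= Qs p.
Proof.
case: (ltnP p (size sl)) => hp.
  rewrite (Qs_step hp); have := pow2_ge_0 (av p); lra.
rewrite /Qs !drop_oversize ?big_nil //; [lra | exact: leqW].
Qed.

Lemma Qs_mono_le p p' : (p <= p')%N -> Qs p' <= Qs p.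
Proof.
move=> /subnK <-; elim: (p' - p)%N => [|j IH]; first by rewrite add0n; lra.
rewrite addSn; exact: Rle_trans (Qs_mono _) IH.
Qed.

Lemma av_le_Qs p : (p < size sl)%N -> av p ^ 2 <= Qs p.
Proof. move=> hp; rewrite (Qs_step hp); have := Qs_ge0 p.+1; lra. Qed.

Lemma Qs_decay tau P T :
  0 <= tau ^ 2 <= 1 ->
  (forall p, (P <= p)%N -> (p <= T)%N -> (p < size sl)%N /\ tau ^ 2 * Qs p < av p ^ 2) ->
  forall j, (P + j <= T.+1)%N -> Qs (P + j) <= (1 - tau ^ 2) ^ j * Qs P.
Proof.
move=> ht H; elim => [|j IH] hj; first by rewrite addn0 /=; lra.
have hj' : (P + j <= T)%N by rewrite addnS ltnS in hj.
have [hs hlt] := H (P + j)%N (leq_addr _ _) hj'.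
have := IH (leqW hj'); rewrite addnS (Qs_step hs).
change ((1 - tau ^ 2) ^ j.+1) with ((1 - tau ^ 2) * (1 - tau ^ 2) ^ j).
have := Qs_ge0 (P + j).+1; have := Qs_ge0 P.
have := pow_le (1 - tau ^ 2) j ltac:(lra).
rewrite (Qs_step hs) in hlt.
move=> h1 h2 h3 h4.
have h5 : av (P + j) ^ 2 + Qs (P + j).+1 <= (1 - tau ^ 2) ^ j * Qs P by [].
nra.
Qed.
End SortedSeq.

Section Analytic.
Variables (J : eqType) (sl : seq J) (f : J -> R) (d0 : J).
Variables (tau M : R) (T L N : nat).
Hypothesis htau : 0 < tau <= 1 / 8.
Hypothesis hM : 1 <= M.
Hypothesis hsize : INR (size sl) <= M.
Hypothesis hT : (T < size sl)%N.
Hypothesis hcrit : forall p, (p <= T)%N -> tau ^ 2 * Qs sl f p < av sl f d0 p ^ 2.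
Hypothesis hNL : (N * L <= T)%N.
Hypothesis hL1 : (1 <= L)%N.
Hypothesis hLdec : (1 - tau ^ 2) ^ L <= tau ^ 4.
Hypothesis hTdec : forall P, (P + L <= N * L)%N -> (1 - tau ^ 2) ^ (T - P) <= tau ^ 3 / M.

Let Qq := Qs sl f.
Let a := av sl f d0.

Lemma decay_here P j : (P + j <= T.+1)%N -> Qq (P + j) <= (1 - tau ^ 2) ^ j * Qq P.
Proof.
apply: Qs_decay; first by split; [apply: pow2_ge_0 | have := pow_incr tau (1/8) 2; simpl; nra].
move=> p _ hp; split; [exact: leq_ltn_trans hp hT | exact: hcrit].
Qed.

Lemma a_pos p : (p <= T)%N -> 0 < a p.
Proof.
move=> hp; rewrite /a; have h1 := hcrit hp; have h2 := Qs_ge0 sl f p.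
have h3 : 0 <= tau ^ 2 by apply: pow2_ge_0.
have h4 : 0 <= av sl f d0 p by apply: Rabs_pos.
case: (Rle_lt_or_eq_dec _ _ h4) => // h5.
rewrite -h5 in h1; simpl in h1; nra.
Qed.

Lemma chosen_ratio s u : (s < u)%N -> (u < N)%N -> a (u * L) <= tau * a (s * L).
Proof.
move=> su uN.
have hUT : (u * L <= T)%N.
  apply: leq_trans hNL; rewrite leq_mul2r; apply/orP; right; exact: ltnW.
have hST : (s * L <= T)%N by apply: leq_trans hUT; rewrite leq_mul2r ltnW ?orbT.
have hPL : (s * L + L <= u * L)%N by rewrite -mulSnr leq_mul2r su orbT.
have h1 : a (u * L) ^ 2 <= Qq (u * L) by apply: av_le_Qs; exact: leq_ltn_trans hUT hT.
have h2 : Qq (u * L) <= Qq (s * L + L) by apply: Qs_mono_le.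
have h3 : Qq (s * L + L) <= (1 - tau ^ 2) ^ L * Qq (s * L).
  apply: decay_here; apply: leq_trans (leqW (leqnn _)); exact: leq_trans hPL hUT.
have h4 := hcrit hST.
have h5 := Qs_ge0 sl f (s * L).
have h6 : Qq (u * L) <= tau ^ 4 * Qq (s * L).
  apply: (Rle_trans _ _ _ h2); apply: (Rle_trans _ _ _ h3).
  apply: Rmult_le_compat_r => //.
have h7 : a (u * L) ^ 2 <= tau ^ 2 * a (s * L) ^ 2.
  have e : tau ^ 4 = tau ^ 2 * tau ^ 2 by ring.
  rewrite e in h6; have ht2 := pow2_ge_0 tau; fold Qq a in h4.
  have := Rmult_le_compat_l (tau ^ 2) _ _ ht2 (Rlt_le _ _ h4).
  rewrite -Rmult_assoc => h8; lra.
have h8 := Rabs_pos (f (nth d0 sl (u * L))).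
have h9 := Rabs_pos (f (nth d0 sl (s * L))).
rewrite /a /av in h7 *.
apply: Rnot_lt_le => hc.
have hpos : 0 <= tau * Rabs (f (nth d0 sl (s * L))) by apply: Rmult_le_pos; lra.
have := Rsqr_incrst_1 _ _ hc hpos h8; rewrite /Rsqr; simpl in h7; lra.
Qed.

Lemma tail_bound s : (s < N)%N ->
  \big[Rplus/0]_(i <- drop T sl) Rabs (f i) <= (tau + 1 / 4) * a (s * L).
Proof.
move=> sN.
have hPL : (s * L + L <= N * L)%N by rewrite -mulSnr leq_mul2r sN orbT.
have hST : (s * L <= T)%N by apply: leq_trans hNL; apply: leq_trans hPL; apply: leq_addr.
have ha := a_pos hST.
set lam := a (s * L) / (2 * M).
have hlam : 0 < lam by rewrite /lam; apply: Rdiv_lt_0_compat; lra.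
have h1 := @sumR_amgm _ (drop T sl) (fun i => Rabs (f i)) lam hlam (fun i => Rabs_pos _).
have h2 : INR (size (drop T sl)) <= M.
  apply: Rle_trans hsize; apply: le_INR; apply/leP; rewrite size_drop; exact: leq_subr.
have hQT : Qq T <= (1 - tau ^ 2) ^ (T - s * L) * Qq (s * L).
  have e : T = (s * L + (T - s * L))%N by rewrite subnKC.
  rewrite {1}e; apply: decay_here; rewrite -e; exact: leqnSn.
have hd := hTdec hPL.
have hQP := hcrit hST; fold Qq a in hQP.
have hQ0 := Qs_ge0 sl f (s * L).
have hQT0 := Qs_ge0 sl f T.
have hQT2 : Qq T <= tau ^ 3 / M * Qq (s * L).
  apply: (Rle_trans _ _ _ hQT); apply: Rmult_le_compat_r => //.
have hsum : \big[Rplus/0]_(i <- drop T sl) (Rabs (f i)) ^ 2 = Qq T by [].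
rewrite hsum in h1.
have hA : Qq T / (2 * lam) <= tau * a (s * L).
  rewrite /lam.
  have e : Qq T / (2 * (a (s * L) / (2 * M))) = Qq T * M / a (s * L) by field; lra.
  rewrite e.
  apply: (Rmult_le_reg_r (a (s * L))) => //.
  rewrite /Rdiv Rmult_assoc Rinv_l; last by lra.
  rewrite Rmult_1_r.
  have e2 : tau ^ 3 / M * Qq (s * L) * M = tau * (tau ^ 2 * Qq (s * L)) by field; lra.
  have : Qq T * M <= tau ^ 3 / M * Qq (s * L) * M by apply: Rmult_le_compat_r; lra.
  rewrite e2 => h; apply: (Rle_trans _ _ _ h).
  have := Rmult_le_compat_l tau _ _ (ltac:(lra) : 0 <= tau) (Rlt_le _ _ hQP) => hh; rewrite Rmult_assoc; replace (a (s * L) * a (s * L)) with (a (s * L) ^ 2) by ring; exact: hh.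
have hB : INR (size (drop T sl)) * lam / 2 <= a (s * L) / 4.
  rewrite /lam; have e : M * (a (s * L) / (2 * M)) / 2 = a (s * L) / 4 by field; lra.
  rewrite -e; apply: Rmult_le_compat_r; [lra|]; apply: Rmult_le_compat_r => //.
  apply: Rlt_le; apply: Rdiv_lt_0_compat; lra.
lra.
Qed.
End Analytic.

Lemma sgn_mismatch U U' E :
  sgn U <> sgn (U + E) -> sgn U' <> sgn (U' + E) -> Rabs (U - U') < Rabs E.
Proof.
rewrite /sgn; do 4 case: Rle_dec => ? //; move=> h1 h2;
  try (exfalso; lra); rewrite /Rabs; do 2 case: Rcase_abs => ?; lra.
Qed.

Lemma b2R_cases c : b2R c = 0 \/ b2R c = 1.
Proof. case: c; [right | left]; reflexivity. Qed.

Lemma b2R_inj c c' : b2R c = b2R c' -> c = c'.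
Proof. case: c; case: c' => //= h; exfalso; lra. Qed.

Definition lin (k m : nat) (v : 'I_k -> 'I_m -> R) (y : {ffun 'I_k * 'I_m -> bool}) : R :=
  \big[Rplus/0]_(i < k) \big[Rplus/0]_(j < m) (v i j * b2R (y (i, j))).

Section Mismatch.
Variables (k m : nat) (w : 'I_k -> 'I_m -> R) (theta : R) (r : 'I_k) (T N : nat) (ch : nat -> 'I_m).
Let sl := sorted_idx (w r).
Let wt := w_tilde w r T.
Let chl := map ch (iota 0 N).
Let A := [seq (r, j) | j <- chl].
Hypothesis huniq : uniq chl.
Hypothesis hchB : forall j, j \in chl -> j \in take T sl.
Let tail := \big[Rplus/0]_(i <- drop T sl) Rabs (w r i).
Variables (beta gamma : R).
Hypothesis hbeta : 0 <= beta.
Hypothesis hratio : forall s u, (s < u)%N -> (u < N)%N ->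
  Rabs (w r (ch u)) <= beta * Rabs (w r (ch s)).
Hypothesis htail : forall s, (s < N)%N -> tail <= gamma * Rabs (w r (ch s)).
Hypothesis hsum : INR N * beta + gamma <= 1.

Definition Ey (y : {ffun 'I_k * 'I_m -> bool}) : R :=
  \big[Rplus/0]_(j < m) ((w r j - wt r j) * b2R (y (r, j))).

Lemma wt_other i : i != r -> wt i = w i.
Proof. by rewrite /wt /w_tilde => /negbTE ->. Qed.

Lemma wt_r j : wt r j = if j \in take T sl then w r j else 0.
Proof. by rewrite /wt /w_tilde eqxx /truncate /B_set. Qed.

Lemma lin_split (y : {ffun 'I_k * 'I_m -> bool}) : lin w y = lin wt y + Ey y.
Proof.
rewrite /lin.
have e : forall i, \big[Rplus/0]_(j < m) (w i j * b2R (y (i, j))) =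
   \big[Rplus/0]_(j < m) (wt i j * b2R (y (i, j))) +
   (\big[Rplus/0]_(j < m) (w i j * b2R (y (i, j))) - \big[Rplus/0]_(j < m) (wt i j * b2R (y (i, j)))).
  move=> i; ring.
rewrite (eq_bigr _ (fun i _ => e i)) big_split /=; congr (_ + _).
rewrite (bigD1 r) //= [X in _ + X]big1 ?Rplus_0_r.
  rewrite /Ey -sumR_sub; apply: eq_bigr => j _; ring.
move=> i ir; rewrite wt_other //; ring.
Qed.

Lemma inA_chl i j : (i, j) \in A -> i = r /\ j \in chl.
Proof. by case/mapP => j' jin [-> ->]. Qed.

Lemma Ey_eq (y y' : {ffun 'I_k * 'I_m -> bool}) : (forall p, p \notin A -> y p = y' p) -> Ey y = Ey y'.
Proof.
move=> H; apply: eq_bigr => j _; rewrite wt_r.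
case: ifP => jB; first by ring.
rewrite H //; apply/negP => /inA_chl [_ jc]; by rewrite hchB in jB.
Qed.

Lemma sum_ord_sl (F : 'I_m -> R) :
  \big[Rplus/0]_(j < m) F j = \big[Rplus/0]_(j <- sl) F j.
Proof. apply: perm_big; rewrite perm_sym /sl /sorted_idx perm_sort enumT //. Qed.

Lemma uniq_sl : uniq sl.
Proof. by rewrite /sl /sorted_idx sort_uniq enum_uniq. Qed.

Lemma Ey_abs (y : {ffun 'I_k * 'I_m -> bool}) : Rabs (Ey y) <= tail.
Proof.
apply: (Rle_trans _ _ _ (sumR_abs _ _ _)).
apply: (Rle_trans _ (\big[Rplus/0]_(j < m) (if j \in take T sl then 0 else Rabs (w r j))) _).
  apply: sumR_le => j _; rewrite wt_r Rabs_mult; case: ifP => _.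
    rewrite Rminus_diag Rabs_R0; lra.
  rewrite Rminus_0_r; have := Rabs_pos (w r j).
  case: (b2R_cases (y (r, j))) => ->; rewrite ?Rabs_R0 ?Rabs_R1; lra.
rewrite sum_ord_sl -{1}(cat_take_drop T sl) big_cat /= big1_seq ?Rplus_0_l.
  rewrite /tail big_seq_cond [X in _ <= X]big_seq_cond; apply: Req_le; apply: eq_bigr => j /andP [jd _].
  have hu := uniq_sl; rewrite -(cat_take_drop T sl) cat_uniq in hu; case/and3P: hu => _ hh _.
  case: ifP => // jt; exfalso.
  have : has (mem (take T sl)) (drop T sl) by apply/hasP; exists j.
  by rewrite (negbTE hh).
by move=> j /andP [_ ->].
Qed.

Lemma lin_diff (y y' : {ffun 'I_k * 'I_m -> bool}) : (forall p, p \notin A -> y p = y' p) ->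
  lin wt y - lin wt y' =
  \big[Rplus/0]_(s <- iota 0 N) (w r (ch s) * (b2R (y (r, ch s)) - b2R (y' (r, ch s)))).
Proof.
move=> H; rewrite /lin -sumR_sub (bigD1 r) //= [X in _ + X]big1 ?Rplus_0_r.
  rewrite -sumR_sub.
  have -> : \big[Rplus/0]_(j < m) (wt r j * b2R (y (r, j)) - wt r j * b2R (y' (r, j))) =
            \big[Rplus/0]_(j <- chl) (wt r j * b2R (y (r, j)) - wt r j * b2R (y' (r, j))).
    rewrite [RHS]big_uniq // (bigID (fun j => j \in chl)) /= [X in _ + X]big1 ?Rplus_0_r //.
    move=> j jn; rewrite H; first by ring.
    by apply/negP => /inA_chl [_ jc]; rewrite jc in jn.
  rewrite big_map; apply: eq_big_seq => s sin.
  rewrite wt_r hchB; first by ring.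
  by apply/mapP; exists s.
move=> i ir; rewrite -sumR_sub big1 // => j _; rewrite H; first by ring.
by apply/negP => /inA_chl [e _]; rewrite e eqxx in ir.
Qed.

Definition Mb (y : {ffun 'I_k * 'I_m -> bool}) : bool :=
  if Req_EM_T (halfspace wt theta y) (halfspace w theta y) then false else true.

Lemma Mb_unique (y y' : {ffun 'I_k * 'I_m -> bool}) : Mb y -> Mb y' -> (forall p, p \notin A -> y p = y' p) -> y = y'.
Proof.
rewrite /Mb; case: Req_EM_T => // h1 _; case: Req_EM_T => // h2 _ H.
rewrite /halfspace in h1 h2.
have ey := lin_split y; have ey' := lin_split y'.
rewrite /lin in ey ey'.
rewrite ey in h1; rewrite ey' in h2.
have hE := Ey_eq H.
have h1' : sgn (lin wt y - theta) <> sgn (lin wt y - theta + Ey y).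
  by move=> e; apply: h1; rewrite /lin in e *; rewrite e; congr sgn; ring.
have h2' : sgn (lin wt y' - theta) <> sgn (lin wt y' - theta + Ey y).
  by move=> e; apply: h2; rewrite /lin in e *; rewrite e hE; congr sgn; ring.
have hlt := sgn_mismatch h1' h2'.
have e3 : lin wt y - theta - (lin wt y' - theta) = lin wt y - lin wt y' by ring.
rewrite e3 (lin_diff H) in hlt.
set d := fun s => b2R (y (r, ch s)) - b2R (y' (r, ch s)).
case: (classic (exists s, [/\ (0 <= s)%N, (s < 0 + N)%N & d s <> 0])) => [ex | nex].
  exfalso.
  have hab := Ey_abs y.
  have : tail <= Rabs (\big[Rplus/0]_(u <- iota 0 N) (w r (ch u) * d u)).
    apply: (@seq_sep (fun s => w r (ch s)) d beta gamma tail N 0 hbeta).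
    - move=> s; rewrite /d; case: (b2R_cases (y (r, ch s))) => ->;
        case: (b2R_cases (y' (r, ch s))) => ->;
        [left; ring | right; replace (0 - 1) with (- 1) by ring; rewrite Rabs_Ropp Rabs_R1 //
        | right; replace (1 - 0) with 1 by ring; exact: Rabs_R1 | left; ring].
    - by move=> s u _ su uN; apply: hratio.
    - by move=> s _ sN; apply: htail.
    - exact: hsum.
    - exact: ex.
  rewrite /d in hlt *; lra.
apply/ffunP => [[i j]].
case: (boolP ((i, j) \in A)) => hin; last exact: H.
have [ei jc] := inA_chl hin; rewrite ei.
move/mapP: jc => [s sin ->].
apply: b2R_inj; apply: Rminus_diag_uniq.
apply: NNPP => hne; apply: nex; exists s; split => //; by move: sin; rewrite mem_iota.
Qed.
End Mismatch.
Lemma numerics (k m : nat) (hk : (2 <= k)%N) (hm : (1 <= m)%N) :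
  let K := INR k in let tau := tau_of k in
  let N := Z.to_nat (Rceil (4 * (INR k)^2 * ln (INR k))) in
  let L := Z.to_nat (Rceil (4 / tau^2 * ln (/ tau))) in
  let T := Z.to_nat (Rfloor (t_of k m)) in
  (0 < tau <= 1 / 8) /\ (1 <= L)%N /\ (N * L <= T)%N /\
      INR T <= t_of k m /\
      (1 - tau ^ 2) ^ L <= tau ^ 4 /\
      (forall P, (P + L <= N * L)%N -> (1 - tau ^ 2) ^ (T - P) <= tau ^ 3 / INR m) /\
      INR N * tau + (tau + 1 / 4) <= 1 /\
      (1 - / K ^ 2 * / 2) ^ N <= / Rsqr K.
Proof.
move=> K tau N L T.
have hK : 2 <= K by rewrite /K; apply: (le_INR 2 k); apply/leP.
have hM : 1 <= INR m by apply: (le_INR 1 m); apply/leP.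
have hK7 : 128 <= K ^ 7.
  have := pow_incr 2 K 7 ltac:(lra); simpl; lra.
have hKp : 0 < K ^ 7 by lra.
have htauE : tau = / K ^ 7 by [].
have htau : 0 < tau <= 1 / 128.
  split; first by rewrite htauE; apply: Rinv_0_lt_compat.
  rewrite htauE /Rdiv Rmult_1_l; apply: Rinv_le_contravar => //; lra.
have hitau : / tau = K ^ 7 by rewrite htauE Rinv_inv.
have hlnK : 0 < ln K by rewrite -ln_1; apply: ln_increasing; lra.
have hlny : 0 < ln (/ tau) by rewrite -ln_1; apply: ln_increasing; lra.
have hNz : 0 <= IZR (Rceil (4 * K ^ 2 * ln K)).
  have := Rceil_ge (4 * K ^ 2 * ln K); have : 0 <= K ^ 2 by apply: pow2_ge_0. nra.
have hN1 : 4 * K ^ 2 * ln K <= INR N.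
  rewrite /N IZR_to_nat //; exact: Rceil_ge.
have hN2 : INR N < 4 * K ^ 2 * ln K + 1.
  rewrite /N IZR_to_nat //; exact: Rceil_lt.
have htau2 : 0 < tau ^ 2 by apply: pow_lt; lra.
have hLz : 0 < 4 / tau ^ 2 * ln (/ tau).
  apply: Rmult_lt_0_compat => //; apply: Rdiv_lt_0_compat; lra.
have hL1 : 4 / tau ^ 2 * ln (/ tau) <= INR L.
  rewrite /L IZR_to_nat; [exact: Rceil_ge | have := Rceil_ge (4 / tau ^ 2 * ln (/ tau)); lra].
have hLge1 : (1 <= L)%N.
  apply/ltP; apply: INR_lt; rewrite INR_0; lra.
set M := INR m.
set X := / tau ^ 2 * (3 * ln (/ tau) + ln M).
have hM' : 1 <= M := hM.
have hlnM : 0 <= ln M by rewrite -ln_1; apply: ln_le_mono; lra.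
have hX : 0 <= X.
  apply: Rmult_le_pos; [apply: Rlt_le; exact: Rinv_0_lt_compat | lra].
have ht : t_of k m = X + INR N * INR L.
  rewrite /t_of /N /L !IZR_to_nat //; have := Rceil_ge (4 / tau ^ 2 * ln (/ tau)); lra.
have hLpos : 1 <= INR L by apply: (le_INR 1 L); apply/leP.
have hNpos : 0 <= INR N by apply: pos_INR.
have hIP := base_Int_part (t_of k m).
have hI0 : (0 <= Int_part (t_of k m))%Z.
  apply Z.lt_succ_r; apply: lt_IZR; rewrite succ_IZR.
  have : 0 <= INR N * INR L by apply: Rmult_le_pos; lra.
  lra.
have hTE : INR T = IZR (Int_part (t_of k m)).
  rewrite /T /Rfloor IZR_to_nat //; exact: IZR_le.
have hT1 : INR T <= t_of k m by rewrite hTE; lra.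
have hT2 : t_of k m - 1 < INR T by rewrite hTE; lra.
have hNLR : INR (N * L) = INR N * INR L := mult_INR N L.
have hNL : (N * L <= T)%N.
  rewrite -ltnS; apply/ltP; apply: INR_lt; rewrite S_INR; lra.
split; first lra.
split; first exact: hLge1.
split; first exact: hNL.
split; first exact: hT1.
have hexpb : forall x, 0 < x -> exp (- ln x) = / x by move=> x hx; exact: exp_neg_ln.
split.
  have h1 := @pow_exp_bound (tau ^ 2) L ltac:(split; [lra | simpl in htau2 |- *; nra]).
  apply: (Rle_trans _ _ _ h1).
  have h2 : 4 * ln (/ tau) <= tau ^ 2 * INR L.
    have := Rmult_le_compat_l (tau ^ 2) _ _ (Rlt_le _ _ htau2) hL1.
    have e : tau ^ 2 * (4 / tau ^ 2 * ln (/ tau)) = 4 * ln (/ tau) by field; lra.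
    lra.
  have e4 : 4 * ln (/ tau) = ln ((/ tau) ^ 4).
    rewrite ln_pow; [simpl; ring | apply: Rinv_0_lt_compat; lra].
  apply: (Rle_trans _ (exp (- ln ((/ tau) ^ 4)))).
    apply: exp_le_mono; lra.
  rewrite hexpb; last by apply: pow_lt; apply: Rinv_0_lt_compat; lra.
  rewrite pow_inv Rinv_inv; lra.
split.
  move=> P hP.
  have hPT : (P <= T)%N by apply: leq_trans hNL; apply: leq_trans hP; apply: leq_addr.
  have hPLR : INR (P + L) <= INR N * INR L.
    rewrite -hNLR; apply: le_INR; apply/leP; exact: hP.
  rewrite plus_INR in hPLR.
  have hTP : X <= INR (T - P).
    rewrite minus_INR; last by apply/leP.
    lra.
  have h1 := @pow_exp_bound (tau ^ 2) (T - P) ltac:(split; [lra | simpl in htau2 |- *; nra]).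
  apply: (Rle_trans _ _ _ h1).
  have h2 : 3 * ln (/ tau) + ln M <= tau ^ 2 * INR (T - P).
    have := Rmult_le_compat_l (tau ^ 2) _ _ (Rlt_le _ _ htau2) hTP.
    have e : tau ^ 2 * X = 3 * ln (/ tau) + ln M by rewrite /X; field; lra.
    lra.
  have e3 : 3 * ln (/ tau) + ln M = ln ((/ tau) ^ 3 * M).
    rewrite ln_mult ?ln_pow; [simpl; ring | apply: Rinv_0_lt_compat; lra
      | apply: pow_lt; apply: Rinv_0_lt_compat; lra | lra].
  apply: (Rle_trans _ (exp (- ln ((/ tau) ^ 3 * M)))).
    apply: exp_le_mono; lra.
  rewrite hexpb; last by apply: Rmult_lt_0_compat; [apply: pow_lt; apply: Rinv_0_lt_compat |]; lra.
  rewrite Rinv_mult pow_inv Rinv_inv; lra.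
split.
  have hlK : ln K <= K - 1 by apply: ln_le_sub1; lra.
  have hK2 : 0 <= K ^ 2 by apply: pow2_ge_0.
  have hN3 : INR N <= 4 * K ^ 3.
    have : 4 * K ^ 2 * ln K <= 4 * K ^ 2 * (K - 1) by apply: Rmult_le_compat_l; lra.
    simpl in *; nra.
  have hNt : INR N * tau <= 4 * K ^ 3 * tau by apply: Rmult_le_compat_r; lra.
  have e : 4 * K ^ 3 * tau = 4 * / K ^ 4 by rewrite htauE; field; lra.
  have hK4 : 16 <= K ^ 4 by have := pow_incr 2 K 4 ltac:(lra); simpl; lra.
  have : / K ^ 4 <= / 16 by apply: Rinv_le_contravar; lra.
  lra.
have hz : / K ^ 2 * K ^ 2 = 1 by field; lra.
have hK2 : 4 <= K ^ 2 by simpl; nra.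
have hz0 : 0 < / K ^ 2 by apply: Rinv_0_lt_compat; lra.
have hz1 : / K ^ 2 <= / 4 by apply: Rinv_le_contravar; lra.
have h1 := @pow_exp_bound (/ K ^ 2 * / 2) N ltac:(split; lra).
replace (1 - / K ^ 2 * / 2) with (1 - / K ^ 2 * / 2) by ring.
apply: (Rle_trans _ _ _ h1).
have h2 : 2 * ln K <= / K ^ 2 * / 2 * INR N.
  have := Rmult_le_compat_l (/ K ^ 2 * / 2) _ _ ltac:(lra) hN1.
  have e : / K ^ 2 * / 2 * (4 * K ^ 2 * ln K) = 2 * ln K by field; lra.
  lra.
have e2 : 2 * ln K = ln (K ^ 2) by rewrite ln_pow; [simpl; ring | lra].
apply: (Rle_trans _ (exp (- ln (K ^ 2)))).
  apply: exp_le_mono; lra.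
rewrite hexpb; last lra.
rewrite /Rsqr; simpl; rewrite Rmult_1_r; lra.
Qed.
Lemma size_sl (m : nat) (u : 'I_m -> R) : size (sorted_idx u) = m.
Proof. by rewrite /sorted_idx size_sort size_enum_ord. Qed.

Lemma crit_facts (m : nat) (u : 'I_m -> R) (tau t : R) (T : nat) (d0 : 'I_m) :
  0 < tau ->
  INR (size (C_set tau u)) > t -> INR T <= t ->
  (T < m)%N /\ forall p, (p <= T)%N ->
     tau ^ 2 * Qs (sorted_idx u) u p < av (sorted_idx u) u d0 p ^ 2.
Proof.
move=> htau hr hT.
have hTC : (T < size (C_set tau u))%N by apply/ltP; apply: INR_lt; lra.
have hcp : (T < crit_pos tau u)%N.
  apply: (leq_trans hTC); rewrite /C_set size_take; case: ifP => // /negbT.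
  by rewrite -leqNgt.
have hcm : (crit_pos tau u <= m)%N.
  by rewrite /crit_pos; have := find_size (crit_cond tau u) (iota 0 m); rewrite size_iota.
have hTm : (T < m)%N by apply: (leq_trans hcp hcm).
split => // p hp.
have hpm : (p < m)%N by apply: leq_ltn_trans hTm.
have hpc : (p < crit_pos tau u)%N by apply: leq_ltn_trans hcp.
have := before_find 0%N hpc; rewrite nth_iota // add0n.
rewrite /crit_cond (drop_nth d0); last by rewrite size_sl.
case: Rle_dec => // hn _.
have hlt : tau * sqrt (sigma2 u p) < av (sorted_idx u) u d0 p by rewrite /av; apply: Rnot_le_lt.
have hQ : 0 <= Qs (sorted_idx u) u p by apply: Qs_ge0.
have h0 : 0 <= tau * sqrt (sigma2 u p) by apply: Rmult_le_pos; [lra | apply: sqrt_pos].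
have := Rsqr_incrst_1 _ _ hlt h0 ltac:(lra).
rewrite /Rsqr.
have e : tau * sqrt (sigma2 u p) * (tau * sqrt (sigma2 u p)) = tau ^ 2 * Qs (sorted_idx u) u p.
  have := sqrt_sqrt (sigma2 u p) hQ; rewrite /Qs /sigma2 => hs.
  rewrite /sigma2 /= in hs *; nra.
rewrite e /=; lra.
Qed.

Theorem lemma4p8 (k m : nat) (hk : (2 <= k)%N) (hm : (1 <= m)%N)
  (D : bool -> {ffun 'I_k -> bool} -> R)
  (hD0 : forall b x, Rle R0 (D b x))
  (hD1 : forall b, \big[Rplus/R0]_(x : {ffun 'I_k -> bool}) D b x = R1)
  (w : 'I_k -> 'I_m -> R) (theta : R) (r : 'I_k)
  (hr : Rgt (INR (size (C_set (tau_of k) (w r)))) (t_of k m))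
  (b : bool) :
  Rle (Rabs (Rminus
          (Enoisy (D b)
             (halfspace (w_tilde w r (Z.to_nat (Rfloor (t_of k m)))) theta))
          (Enoisy (D b) (halfspace w theta))))
      (Rinv (Rsqr (INR k))).
Proof.
have := numerics hk hm; cbv zeta.
set K := INR k; set tau := tau_of k; set T := Z.to_nat (Rfloor (t_of k m)).
set N := Z.to_nat (Rceil (4 * K ^ 2 * ln K)).
set L := Z.to_nat (Rceil (4 / tau ^ 2 * ln (/ tau))).
move=> [htau [hL1 [hNL [hT1 [hLdec [hTdec [hsum halpha]]]]]]].
pose d0 : 'I_m := Ordinal hm.
have [hTm hcrit] := crit_facts d0 (proj1 htau) hr hT1.
set sl := sorted_idx (w r) in hcrit.
have hsl : size sl = m by apply: size_sl.
pose ch := fun s => nth d0 sl (s * L).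
have hM : 1 <= INR m by apply: (le_INR 1 m); apply/leP.
have hsize : INR (size sl) <= INR m by rewrite hsl; lra.
have hTs : (T < size sl)%N by rewrite hsl.
have hchpos : forall s, (s < N)%N -> (s * L < T)%N.
  move=> s sN; apply: leq_trans hNL; rewrite ltn_mul2r sN andbT; exact: hL1.
have hratio : forall s u, (s < u)%N -> (u < N)%N ->
    Rabs (w r (ch u)) <= tau * Rabs (w r (ch s)).
  move=> s u su uN; exact: (chosen_ratio (f := w r) (d0 := d0) htau hTs hcrit hNL hLdec su uN).
have htail : forall s, (s < N)%N ->
    \big[Rplus/0]_(i <- drop T sl) Rabs (w r i) <= (tau + 1 / 4) * Rabs (w r (ch s)).
  move=> s sN; exact: (tail_bound (f := w r) (d0 := d0) htau hM hsize hTs hcrit hNL hTdec sN).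
have huniq : uniq (map ch (iota 0 N)).
  rewrite map_inj_in_uniq ?iota_uniq // => s u; rewrite !mem_iota !add0n => /andP [_ sN] /andP [_ uN].
  rewrite /ch => e.
  have hs : (s * L < size sl)%N by rewrite hsl; apply: ltn_trans hTm; exact: hchpos.
  have hu : (u * L < size sl)%N by rewrite hsl; apply: ltn_trans hTm; exact: hchpos.
  move/eqP: e; rewrite (nth_uniq d0 hs hu); last by rewrite /sl /sorted_idx sort_uniq enum_uniq.
  by rewrite eqn_mul2r eqn0Ngt hL1 /= => /eqP.
have hchB : forall j, j \in map ch (iota 0 N) -> j \in take T sl.
  move=> j /mapP [s]; rewrite mem_iota add0n => /andP [_ sN] ->.
  rewrite /ch -(nth_take d0 (hchpos s sN)); apply: mem_nth.
  by rewrite size_take hTs; exact: hchpos.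
have hbeta : 0 <= tau by lra.
have Hu := Mb_unique (theta := theta) huniq hchB hbeta hratio htail hsum.
set wt := w_tilde w r T.
have hK : 2 <= K by rewrite /K; apply: (le_INR 2 k); apply/leP.
have hK2 : 4 <= K ^ 2 by simpl; nra.
have hz0 : 0 < / K ^ 2 by apply: Rinv_0_lt_compat; lra.
have hz1 : / K ^ 2 <= / 4 by apply: Rinv_le_contravar; lra.
set alpha := 1 - / K ^ 2 * / 2.
have hinv : 0 < / Rsqr K by apply: Rinv_0_lt_compat; rewrite /Rsqr; nra.
have Hinner : forall x : {ffun 'I_k * 'I_m -> bool},
    Rabs (\big[Rplus/0]_(y : {ffun 'I_k * 'I_m -> bool})
            ((\big[Rmult/1]_(p : 'I_k * 'I_m) noise k (x p) (y p)) *
             (halfspace wt theta y - halfspace w theta y))) <= / Rsqr K.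
  move=> x.
  pose q := fun (p : 'I_k * 'I_m) (c : bool) => noise k (x p) c.
  have hq0 : forall p c, 0 <= q p c.
    move=> p c; rewrite /q /noise; case: eqP => _; rewrite -/K; lra.
  have hq1 : forall p, q p true + q p false = 1.
    move=> p; rewrite /q /noise; case: (x p) => /=; rewrite -/K; lra.
  have hqa : forall p c, q p c <= alpha.
    move=> p c; rewrite /q /noise /alpha; case: eqP => _; rewrite -/K; lra.
  apply: (Rle_trans _ _ _ (sumR_abs _ _ _)).
  refine (Rle_trans _ (\big[Rplus/0]_(y : {ffun 'I_k * 'I_m -> bool})
                        (mu q y * ind (Mb w theta r T y))) _ _ _).
    apply: sumR_le => y _.
    rewrite Rabs_mult Rabs_pos_eq; last exact: (mu_ge0 hq0).
    apply: Rmult_le_compat_l; first exact: (mu_ge0 hq0).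
    rewrite /Mb -/wt /ind; case: Req_EM_T => [he | _] /=; first by rewrite he Rminus_diag Rabs_R0; lra.
    rewrite /halfspace /sgn; destruct (Rle_dec _ _); destruct (Rle_dec _ _);
      rewrite /Rabs; destruct (Rcase_abs _); simpl; lra.
  have hA : uniq [seq (r, j) | j <- [seq ch i | i <- iota 0 N]].
    rewrite map_inj_uniq //; by move=> j1 j2 [].
  have := measure_bound hq0 hq1 hqa hA (F := Mb w theta r T) (fun y y' => Hu y y').
  rewrite !size_map size_iota => h; apply: (Rle_trans _ _ _ h); exact: halpha.
rewrite /Enoisy -sumR_sub.
apply: (Rle_trans _ _ _ (sumR_abs _ _ _)).
apply: (Rle_trans _ (\big[Rplus/0]_(x : {ffun 'I_k * 'I_m -> bool})
         ((\big[Rmult/1]_(j < m) D b [ffun i => x (i, j)]) * / Rsqr K)) _).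
  apply: sumR_le => x _.
  have hPx : 0 <= \big[Rmult/1]_(j < m) D b [ffun i => x (i, j)].
    by apply: prodR_ge0 => j _; apply: hD0.
  rewrite -sumR_sub.
  have -> : \big[Rplus/0]_(y : {ffun 'I_k * 'I_m -> bool})
     ((\big[Rmult/1]_(j < m) D b [ffun i => x (i, j)]) *
        (\big[Rmult/1]_(p : 'I_k * 'I_m) noise k (x p) (y p)) * halfspace wt theta y -
      (\big[Rmult/1]_(j < m) D b [ffun i => x (i, j)]) *
        (\big[Rmult/1]_(p : 'I_k * 'I_m) noise k (x p) (y p)) * halfspace w theta y) =
     (\big[Rmult/1]_(j < m) D b [ffun i => x (i, j)]) *
     \big[Rplus/0]_(y : {ffun 'I_k * 'I_m -> bool})
            ((\big[Rmult/1]_(p : 'I_k * 'I_m) noise k (x p) (y p)) *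
             (halfspace wt theta y - halfspace w theta y)).
    rewrite -sumR_mull; apply: eq_bigr => y _; ring.
  rewrite Rabs_mult Rabs_pos_eq //; apply: Rmult_le_compat_l => //; exact: Hinner.
have -> : \big[Rplus/0]_(x : {ffun 'I_k * 'I_m -> bool})
         ((\big[Rmult/1]_(j < m) D b [ffun i => x (i, j)]) * / Rsqr K) =
       / Rsqr K * \big[Rplus/0]_(x : {ffun 'I_k * 'I_m -> bool})
         (\big[Rmult/1]_(j < m) D b [ffun i => x (i, j)]).
  rewrite -sumR_mull; apply: eq_bigr => x _; ring.
rewrite (Dsum1 m (hD1 b)); lra.
Qed.
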